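(* Let $\mathrm{BS}$ be the Biggs-Smith graph. (1) Suppose $(u,v),x$ and $(u',v'),x'$ are edge-vertex pairs in $\mathrm{BS}$ (with $uv,u'v'\in E(\mathrm{BS})$) such that $\operatorname{dist}(u,x)=\operatorname{dist}(u',x')$ and $\operatorname{dist}(v,x)=\operatorname{dist}(v',x')$. Then there is an automorphism $\phi$ of $\mathrm{BS}$ with $\phi(u)=u'$, $\phi(v)=v'$, $\phi(x)=x'$. (2) Suppose $(u,v),(x,y)$ and $(u',v'),(x',y')$ are pairs of edges of $\mathrm{BS}$ such that $\operatorname{dist}(a,b)=\operatorname{dist}(a',b')$ for all $(a,b,a',b')\in\{(u,x,u',x'),(u,y,u',y'),(v,x,v',x'),(v,y,v',y')\}$. Then there is an automorphism $\phi$ of $\mathrm{BS}$ with $\phi(u)=u'$, $\phi(v)=v'$, $\phi(x)=x'$, $\phi(y)=y'$.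
   Context: The Biggs-Smith graph $\mathrm{BS}$ is the cubic graph on the $102$ vertices $ia,ib,ic,id,ie,if$ for $i\in\{1,\dots,17\}$ (indices taken modulo 17, with $0$ written as $17$), whose edges are: $ie\,ia$, $ie\,ib$, $ie\,if$, $if\,ic$, $if\,id$ for each $i$; and $ia\,(i+1)a$, $ib\,(i+4)b$, $ic\,(i+2)c$, $id\,(i+8)d$ for each $i$. $\operatorname{dist}$ is graph distance; an automorphism is a bijection of the vertex set preserving adjacency and non-adjacency. *)

(* Defs.v *)
From mathcomp Require Import all_boot all_fingroup.
Set Implicit Arguments. Unset Strict Implicit. Unset Printing Implicit Defensive.

(* Vertices of the Biggs-Smith graph: pairs (i, s) with i : 'I_17 the index
   (index 0 represents 17, indices taken mod 17) and s : 'I_6 the letter,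
   with a = 0, b = 1, c = 2, d = 3, e = 4, f = 5. *)
Definition BSV : finType := ('I_17 * 'I_6)%type.

Definition la := 0%N. Definition lb := 1%N. Definition lc := 2%N.
Definition ld := 3%N. Definition le := 4%N. Definition lf := 5%N.

Definition bs_arc (x y : BSV) : bool :=
  let i := nat_of_ord x.1 in let s := nat_of_ord x.2 in
  let j := nat_of_ord y.1 in let t := nat_of_ord y.2 in
  [|| [&& i == j, s == le & t == la],
      [&& i == j, s == le & t == lb],
      [&& i == j, s == le & t == lf],
      [&& i == j, s == lf & t == lc],
      [&& i == j, s == lf & t == ld],
      [&& j == (i + 1) %% 17, s == la & t == la],
      [&& j == (i + 4) %% 17, s == lb & t == lb],
      [&& j == (i + 2) %% 17, s == lc & t == lc]
    | [&& j == (i + 8) %% 17, s == ld & t == ld]].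

Definition bs_adj (x y : BSV) : bool := bs_arc x y || bs_arc y x.

Fixpoint bs_reach (n : nat) (x y : BSV) : bool :=
  match n with
  | 0 => x == y
  | n'.+1 => bs_reach n' x y || [exists z, bs_reach n' x z && bs_adj z y]
  end.

(* graph distance: least n such that y is reachable from x in at most n steps
   (the graph is connected with 102 vertices, so the search range suffices) *)
Definition bs_dist (x y : BSV) : nat :=
  find (fun n => bs_reach n x y) (iota 0 #|BSV|).

Definition bs_aut (phi : {perm BSV}) : Prop :=
  forall x y, bs_adj (phi x) (phi y) = bs_adj x y.

(* Main.v *)
Require Import Defs.
From mathcomp Require Import all_boot all_fingroup.
From mathcomp Require Import zify.
Set Implicit Arguments. Unset Strict Implicit. Unset Printing Implicit Defensive.

Definition gtbl : seq (seq nat) := [:: [:: 10; 31; 61; 88; 7; 85; 11; 20; 101; 86; 8; 98; 9; 15; 64; 62; 63; 65; 57; 5; 99; 53; 3; 51; 59; 55; 60; 48; 58; 54; 56; 32; 45; 46; 44; 47; 68; 69; 66; 67; 71; 70; 80; 2; 93; 94; 92; 95; 83; 79; 72; 84; 82; 78; 81; 35; 39; 89; 33; 87; 27; 21; 76; 74; 75; 77; 29; 14; 41; 50; 26; 38; 28; 1; 73; 52; 25; 49; 24; 34; 40; 42; 30; 36; 18; 23; 97; 43; 22; 19; 12; 17; 37; 91; 16; 13; 6; 4; 100; 90; 0; 96];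
 [:: 43; 97; 23; 18; 19; 22; 46; 48; 40; 30; 42; 36; 47; 56; 20; 35; 44; 32; 45; 95; 41; 87; 93; 39; 99; 100; 8; 86; 101; 98; 51; 52; 38; 62; 53; 50; 3; 59; 11; 63; 57; 9; 5; 92; 26; 17; 2; 14; 4; 96; 10; 12; 0; 6; 1; 49; 29; 24; 25; 28; 79; 58; 7; 34; 55; 31; 82; 80; 27; 33; 83; 81; 78; 90; 85; 89; 84; 88; 72; 73; 75; 74; 76; 77; 66; 54; 61; 65; 60; 64; 70; 68; 21; 15; 71; 69; 67; 94; 37; 16; 91; 13];
 [:: 100; 73; 43; 22; 97; 19; 96; 4; 10; 12; 0; 6; 90; 95; 67; 13; 94; 91; 84; 89; 7; 61; 88; 85; 78; 76; 70; 60; 72; 66; 82; 1; 31; 58; 79; 55; 83; 92; 71; 56; 80; 68; 81; 87; 34; 32; 33; 35; 27; 77; 69; 23; 75; 21; 29; 25; 30; 18; 28; 24; 26; 2; 15; 16; 14; 17; 38; 39; 36; 37; 41; 40; 50; 74; 63; 64; 62; 65; 53; 49; 42; 54; 52; 48; 51; 5; 9; 59; 3; 57; 99; 93; 46; 44; 45; 47; 101; 86; 11; 20; 98; 8];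
 [:: 52; 54; 46; 36; 48; 42; 53; 62; 26; 41; 50; 38; 51; 101; 47; 93; 99; 45; 3; 4; 14; 92; 5; 2; 57; 58; 44; 68; 59; 56; 9; 65; 17; 69; 63; 15; 11; 98; 32; 23; 8; 20; 10; 0; 16; 18; 6; 12; 7; 55; 35; 30; 31; 34; 85; 64; 13; 40; 61; 37; 88; 86; 33; 39; 89; 87; 84; 96; 91; 95; 90; 94; 78; 79; 81; 80; 82; 83; 72; 60; 67; 71; 66; 70; 76; 74; 27; 21; 77; 75; 73; 100; 43; 22; 97; 19; 49; 1; 29; 24; 25; 28]].
Definition D0tbl : seq nat := [:: 0; 2; 3; 3; 1; 2; 1; 3; 4; 4; 2; 3; 2; 4; 4; 5; 3; 4; 3; 4; 5; 6; 4; 5; 4; 3; 5; 6; 4; 5; 5; 4; 6; 7; 5; 6; 6; 5; 6; 6; 6; 7; 7; 5; 7; 5; 6; 6; 6; 4; 6; 4; 5; 5; 6; 4; 6; 4; 5; 5; 7; 5; 7; 5; 6; 6; 6; 5; 6; 6; 6; 7; 5; 4; 6; 7; 5; 6; 4; 3; 5; 6; 4; 5; 3; 4; 5; 6; 4; 5; 2; 4; 4; 5; 3; 4; 1; 3; 4; 4; 2; 3].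
Definition D1tbl : seq nat := [:: 1; 1; 2; 2; 0; 1; 2; 4; 5; 4; 3; 4; 3; 5; 3; 5; 4; 4; 4; 5; 6; 7; 5; 6; 4; 2; 4; 5; 3; 4; 5; 4; 7; 6; 5; 6; 6; 6; 5; 6; 7; 6; 6; 6; 6; 5; 7; 6; 5; 3; 5; 3; 4; 4; 5; 3; 5; 3; 4; 4; 6; 6; 6; 5; 7; 6; 6; 6; 5; 6; 7; 6; 5; 4; 7; 6; 5; 6; 4; 2; 4; 5; 3; 4; 4; 5; 6; 7; 5; 6; 3; 5; 3; 5; 4; 4; 2; 4; 5; 4; 3; 4].
Definition watbl : seq (seq nat * seq nat) := [:: ([:: 0; 4], [:: ]);
 ([:: 0; 6], [:: 1; 2; 1; 1; 1; 1]);
 ([:: 0; 96], [:: 1; 0; 3; 0; 3; 3]);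
 ([:: 1; 4], [:: 0; 1; 1]);
 ([:: 1; 25], [:: 0; 3; 3; 0; 3]);
 ([:: 1; 79], [:: 3; 0; 0; 3; 2]);
 ([:: 2; 5], [:: 2; 3]);
 ([:: 2; 14], [:: 3; 0; 3; 3]);
 ([:: 2; 92], [:: 0; 0; 3; 3; 3]);
 ([:: 3; 5], [:: 2; 3; 3; 3; 2]);
 ([:: 3; 51], [:: 3; 3; 0; 0; 0]);
 ([:: 3; 57], [:: 3; 0; 3; 3; 0]);
 ([:: 4; 0], [:: 3; 3; 3; 0; 3; 2; 1]);
 ([:: 4; 1], [:: 1; 2; 3; 0; 1]);
 ([:: 4; 5], [:: 2; 3; 0; 1; 1]);
 ([:: 5; 2], [:: 0; 3; 3; 0; 3; 2]);
 ([:: 5; 3], [:: 0; 0; 3; 2; 3]);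
 ([:: 5; 4], [:: 3; 3; 2]);
 ([:: 6; 0], [:: 3; 2; 1; 0; 3]);
 ([:: 6; 10], [:: 1; 1; 2; 3]);
 ([:: 6; 12], [:: 1; 0; 3; 3]);
 ([:: 7; 10], [:: 1; 2; 3; 3; 3; 0]);
 ([:: 7; 31], [:: 3; 0; 3; 2; 1]);
 ([:: 7; 85], [:: 3; 0; 0; 1; 0]);
 ([:: 8; 11], [:: 1; 2; 2; 3; 2]);
 ([:: 8; 20], [:: 2; 2]);
 ([:: 8; 98], [:: 2; 1; 0; 1; 0; 1]);
 ([:: 9; 11], [:: 1; 2; 2; 1]);
 ([:: 9; 57], [:: 0; 1; 0; 1; 0; 3]);
 ([:: 9; 63], [:: 0; 1; 2; 2; 3]);
 ([:: 10; 6], [:: 0; 1; 2; 2; 3; 2]);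
 ([:: 10; 7], [:: 2]);
 ([:: 10; 11], [:: 1; 0; 1; 0; 1]);
 ([:: 11; 8], [:: 1; 0; 3; 3; 0]);
 ([:: 11; 9], [:: 0; 0; 0]);
 ([:: 11; 10], [:: 0; 1; 1; 0; 0; 3]);
 ([:: 12; 6], [:: 1; 2; 1; 1; 2]);
 ([:: 12; 16], [:: 0; 0; 1; 2; 2; 3]);
 ([:: 12; 18], [:: 3; 2; 3; 2; 3]);
 ([:: 13; 16], [:: 3; 2; 2; 2]);
 ([:: 13; 37], [:: 0; 1; 1; 1; 2]);
 ([:: 13; 91], [:: 0; 3; 0; 3; 0]);
 ([:: 14; 2], [:: 0; 3; 3; 0; 1]);
 ([:: 14; 17], [:: 2; 1; 1; 0; 1]);
 ([:: 14; 26], [:: 0; 0; 0; 1]);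
 ([:: 15; 17], [:: 3; 0; 3; 0]);
 ([:: 15; 63], [:: 0; 0; 0; 1; 0]);
 ([:: 15; 69], [:: 1; 1; 1; 2]);
 ([:: 16; 12], [:: 1; 1; 1; 2; 2]);
 ([:: 16; 13], [:: 2; 3; 3; 0; 1; 1]);
 ([:: 16; 17], [:: 1; 0; 0; 3; 0]);
 ([:: 17; 14], [:: 1; 2; 1; 1]);
 ([:: 17; 15], [:: 0; 1; 1; 1]);
 ([:: 17; 16], [:: 2; 3; 0]);
 ([:: 18; 12], [:: 2; 1; 1; 2; 1]);
 ([:: 18; 22], [:: 2; 3; 3; 2; 1]);
 ([:: 18; 24], [:: 1; 1; 2; 3; 0]);
 ([:: 19; 22], [:: 1; 1; 0; 1; 2]);
 ([:: 19; 43], [:: 1; 2; 2; 1; 1; 2]);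
 ([:: 19; 97], [:: 2; 3; 0; 1]);
 ([:: 20; 8], [:: 3; 0; 0; 0; 1]);
 ([:: 20; 23], [:: 3; 0; 3; 3; 0; 1]);
 ([:: 20; 32], [:: 1; 2; 3; 3; 0]);
 ([:: 21; 23], [:: 2; 2; 2; 3]);
 ([:: 21; 69], [:: 3; 3; 3]);
 ([:: 21; 75], [:: 1; 0; 3]);
 ([:: 22; 18], [:: 1; 0; 3; 0]);
 ([:: 22; 19], [:: 3; 3; 3; 2]);
 ([:: 22; 23], [:: 0; 3; 3; 0; 0; 0]);
 ([:: 23; 20], [:: 2; 2; 3; 3; 2]);
 ([:: 23; 21], [:: 3; 0; 0; 3; 3; 3]);
 ([:: 23; 22], [:: 3; 2; 3]);
 ([:: 24; 18], [:: 0; 0; 0; 3]);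
 ([:: 24; 28], [:: 0; 3; 3; 0; 0]);
 ([:: 24; 30], [:: 2; 1; 2; 1; 2]);
 ([:: 25; 1], [:: 1; 0]);
 ([:: 25; 28], [:: 0; 0; 1; 1; 2]);
 ([:: 25; 49], [:: 2; 3; 2; 1]);
 ([:: 26; 14], [:: 1; 2; 2]);
 ([:: 26; 29], [:: 2; 2; 2; 3; 3; 0]);
 ([:: 26; 38], [:: 3; 0; 0; 3; 0]);
 ([:: 27; 29], [:: 3; 2; 3; 0; 0; 0]);
 ([:: 27; 75], [:: 2; 2; 1; 2; 2]);
 ([:: 27; 81], [:: 3; 3; 3; 0]);
 ([:: 28; 24], [:: 3; 0; 0; 3]);
 ([:: 28; 25], [:: 2; 2; 1; 2]);
 ([:: 28; 29], [:: 0; 1; 1; 0]);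
 ([:: 29; 26], [:: 2; 1; 2; 1]);
 ([:: 29; 27], [:: 1; 0; 0]);
 ([:: 29; 28], [:: 1; 1; 2; 3; 3]);
 ([:: 30; 24], [:: 1; 0; 1; 1; 2; 1]);
 ([:: 30; 34], [:: 2; 1; 0; 1; 0]);
 ([:: 30; 36], [:: 2; 2; 1]);
 ([:: 31; 7], [:: 1; 1]);
 ([:: 31; 34], [:: 0; 3; 2; 3; 0]);
 ([:: 31; 55], [:: 3; 3; 0; 3]);
 ([:: 32; 20], [:: 2; 1; 1]);
 ([:: 32; 35], [:: 3; 0; 1; 1; 1]);
 ([:: 32; 44], [:: 3; 2; 3; 0]);
 ([:: 33; 35], [:: 0; 0; 3; 3]);
 ([:: 33; 81], [:: 2; 1; 1; 0]);
 ([:: 33; 87], [:: 1; 0; 3; 2; 1]);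
 ([:: 34; 30], [:: 1; 0; 3; 2; 1; 2]);
 ([:: 34; 31], [:: 0; 0; 0; 3; 0]);
 ([:: 34; 35], [:: 1; 2; 3; 3; 3]);
 ([:: 35; 32], [:: 2; 2; 1; 0]);
 ([:: 35; 33], [:: 1; 1; 2]);
 ([:: 35; 34], [:: 2; 3; 0; 0; 1]);
 ([:: 36; 30], [:: 3; 0; 0; 0]);
 ([:: 36; 40], [:: 0; 3; 3; 0]);
 ([:: 36; 42], [:: 1; 2; 3; 3; 3; 2]);
 ([:: 37; 13], [:: 2; 3; 3]);
 ([:: 37; 40], [:: 1; 0; 0; 3]);
 ([:: 37; 61], [:: 3; 0; 0]);
 ([:: 38; 26], [:: 0; 0; 1; 0; 0]);
 ([:: 38; 41], [:: 1; 0; 0; 0]);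
 ([:: 38; 50], [:: 3; 3; 0; 1; 1; 1]);
 ([:: 39; 41], [:: 0; 1; 2; 3; 2]);
 ([:: 39; 87], [:: 0; 3; 0; 1; 1; 2; 3]);
 ([:: 39; 93], [:: 3; 3; 2; 3]);
 ([:: 40; 36], [:: 2; 2; 3; 2]);
 ([:: 40; 37], [:: 1; 2; 1; 2; 2; 1; 1]);
 ([:: 40; 41], [:: 3; 2; 2]);
 ([:: 41; 38], [:: 2; 3; 3; 0]);
 ([:: 41; 39], [:: 0; 0; 1; 2; 2]);
 ([:: 41; 40], [:: 3; 3; 0; 0; 0; 1]);
 ([:: 42; 36], [:: 0; 1; 0; 1]);
 ([:: 42; 46], [:: 0; 1; 2; 3; 3; 0; 1]);
 ([:: 42; 48], [:: 3; 2]);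
 ([:: 43; 19], [:: 3]);
 ([:: 43; 46], [:: 1; 0; 3; 0; 0]);
 ([:: 43; 67], [:: 1; 1; 1; 0; 3]);
 ([:: 44; 32], [:: 0; 0; 3; 0]);
 ([:: 44; 47], [:: 1; 1; 2; 2]);
 ([:: 44; 56], [:: 0; 0; 0; 1; 2; 1; 1]);
 ([:: 45; 47], [:: 1; 1; 2; 1; 1]);
 ([:: 45; 93], [:: 2; 3; 2; 3; 0]);
 ([:: 45; 99], [:: 1; 2; 3; 0]);
 ([:: 46; 42], [:: 1; 2; 3]);
 ([:: 46; 43], [:: 0; 0; 3; 0; 0]);
 ([:: 46; 47], [:: 0; 3; 3]);
 ([:: 47; 44], [:: 0; 1; 0; 1; 2]);
 ([:: 47; 45], [:: 2; 2; 2; 1; 0]);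
 ([:: 47; 46], [:: 2; 1; 1; 2]);
 ([:: 48; 42], [:: 2; 3; 3; 3; 0]);
 ([:: 48; 52], [:: 0; 0; 3; 0; 0; 0]);
 ([:: 48; 54], [:: 1; 1; 2; 3; 0; 1]);
 ([:: 49; 25], [:: 2; 2; 1; 1; 1]);
 ([:: 49; 52], [:: 3; 2; 1; 0]);
 ([:: 49; 73], [:: 3; 3; 0; 0; 1]);
 ([:: 50; 38], [:: 3; 2; 2; 1; 0]);
 ([:: 50; 53], [:: 2; 2; 3; 0; 0]);
 ([:: 50; 62], [:: 1; 2]);
 ([:: 51; 3], [:: 3; 2; 2; 1]);
 ([:: 51; 53], [:: 3; 2; 1; 0; 1; 0]);
 ([:: 51; 99], [:: 0; 3; 0; 1; 0]);
 ([:: 52; 48], [:: 1]);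
 ([:: 52; 49], [:: 0; 1; 0; 1; 0]);
 ([:: 52; 53], [:: 3; 3; 2; 2; 3; 0]);
 ([:: 53; 50], [:: 2; 3; 3; 3]);
 ([:: 53; 51], [:: 1; 1; 0; 3; 3]);
 ([:: 53; 52], [:: 2; 1; 0; 3]);
 ([:: 54; 48], [:: 1; 0; 1; 1]);
 ([:: 54; 58], [:: 1; 0; 3; 3; 0; 3]);
 ([:: 54; 60], [:: 0; 0; 3; 2]);
 ([:: 55; 31], [:: 2; 1; 0]);
 ([:: 55; 58], [:: 0; 1; 1; 2]);
 ([:: 55; 79], [:: 3; 0; 0; 1]);
 ([:: 56; 44], [:: 1; 2; 1; 2; 1]);
 ([:: 56; 59], [:: 1; 1; 1; 2; 3; 3]);
 ([:: 56; 68], [:: 2; 2; 2; 1]);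
 ([:: 57; 3], [:: 0; 1; 0; 0; 1]);
 ([:: 57; 9], [:: 3; 3; 2; 2]);
 ([:: 57; 59], [:: 2; 1; 2; 2; 1; 1]);
 ([:: 58; 54], [:: 1; 1; 0]);
 ([:: 58; 55], [:: 0; 3; 0; 1; 2]);
 ([:: 58; 59], [:: 2; 3; 0; 0; 3]);
 ([:: 59; 56], [:: 3; 2; 3; 3]);
 ([:: 59; 57], [:: 0; 0; 3]);
 ([:: 59; 58], [:: 3; 3; 0; 0]);
 ([:: 60; 54], [:: 0; 3; 3; 3; 0]);
 ([:: 60; 64], [:: 2; 1; 2; 2]);
 ([:: 60; 66], [:: 1; 2; 3; 2; 1; 0]);
 ([:: 61; 37], [:: 0; 3; 3; 3]);
 ([:: 61; 64], [:: 0; 1; 0; 3]);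
 ([:: 61; 85], [:: 2; 2; 3]);
 ([:: 62; 50], [:: 3; 0; 0; 3; 3]);
 ([:: 62; 65], [:: 0; 3; 2; 1]);
 ([:: 62; 74], [:: 0; 0; 1; 0]);
 ([:: 63; 9], [:: 0; 3; 0; 3; 2]);
 ([:: 63; 15], [:: 3; 3; 3; 2; 3]);
 ([:: 63; 65], [:: 0; 1; 0; 3; 2; 3]);
 ([:: 64; 60], [:: 0; 0; 1]);
 ([:: 64; 61], [:: 3; 3; 0; 1]);
 ([:: 64; 65], [:: 1; 2; 1; 0]);
 ([:: 65; 62], [:: 1; 1; 1]);
 ([:: 65; 63], [:: 2; 2; 3; 0]);
 ([:: 65; 64], [:: 3; 0; 3]);
 ([:: 66; 60], [:: 0; 1; 0; 0]);
 ([:: 66; 70], [:: 1; 2; 1]);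
 ([:: 66; 72], [:: 0; 1; 1; 2; 3; 3]);
 ([:: 67; 43], [:: 0; 0; 3; 3; 0; 1]);
 ([:: 67; 70], [:: 1; 2; 3; 2]);
 ([:: 67; 91], [:: 1; 1; 0; 1]);
 ([:: 68; 56], [:: 2; 3; 0; 0; 0]);
 ([:: 68; 71], [:: 3; 3; 0]);
 ([:: 68; 80], [:: 3; 0; 0; 3; 0; 3]);
 ([:: 69; 15], [:: 0; 1; 2]);
 ([:: 69; 21], [:: 2; 3; 0; 0]);
 ([:: 69; 71], [:: 1; 2; 1; 1; 0]);
 ([:: 70; 66], [:: 2; 2; 3; 3; 0]);
 ([:: 70; 67], [:: 0; 1; 2; 2]);
 ([:: 70; 71], [:: 3; 3; 0; 0; 1; 1]);
 ([:: 71; 68], [:: 1; 0; 3; 2]);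
 ([:: 71; 69], [:: 3; 3; 3; 0; 1; 1]);
 ([:: 71; 70], [:: 2; 3; 2; 2]);
 ([:: 72; 66], [:: 1; 1; 2; 1; 2]);
 ([:: 72; 76], [:: 2; 1; 2]);
 ([:: 72; 78], [:: 0; 1; 2; 2; 2]);
 ([:: 73; 49], [:: 3; 3; 2; 1; 2; 2]);
 ([:: 73; 76], [:: 2; 1; 2; 3; 3; 2]);
 ([:: 73; 97], [:: 0; 0; 1; 1]);
 ([:: 74; 62], [:: 1; 2; 3; 3; 2]);
 ([:: 74; 77], [:: 1; 0; 3; 2; 3]);
 ([:: 74; 86], [:: 3; 0; 3; 2]);
 ([:: 75; 21], [:: 2; 3; 3; 0; 1]);
 ([:: 75; 27], [:: 0; 1]);
 ([:: 75; 77], [:: 3; 2; 3; 2]);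
 ([:: 76; 72], [:: 2; 3; 3; 0; 1; 2]);
 ([:: 76; 73], [:: 0; 1; 0]);
 ([:: 76; 77], [:: 3; 2; 1]);
 ([:: 77; 74], [:: 2; 2; 2; 3; 0]);
 ([:: 77; 75], [:: 2; 3; 0; 3]);
 ([:: 77; 76], [:: 2; 1; 1; 1]);
 ([:: 78; 72], [:: 2; 2; 3; 3; 3]);
 ([:: 78; 82], [:: 1; 2; 1; 2]);
 ([:: 78; 84], [:: 3; 2; 1; 2]);
 ([:: 79; 1], [:: 1; 0; 0; 1; 1]);
 ([:: 79; 55], [:: 3; 2; 1; 2; 2]);
 ([:: 79; 82], [:: 2; 3; 2; 1; 0]);
 ([:: 80; 68], [:: 1; 0; 1]);
 ([:: 80; 83], [:: 2; 3; 2]);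
 ([:: 80; 92], [:: 1; 2; 3; 3; 0; 1]);
 ([:: 81; 27], [:: 0; 3; 2]);
 ([:: 81; 33], [:: 1; 1; 2; 3; 3; 2]);
 ([:: 81; 83], [:: 2; 1; 0; 1; 1]);
 ([:: 82; 78], [:: 3; 0; 1; 1; 2; 3; 3]);
 ([:: 82; 79], [:: 1; 0; 1; 0]);
 ([:: 82; 83], [:: 2; 1]);
 ([:: 83; 80], [:: 3; 0; 1; 2; 2]);
 ([:: 83; 81], [:: 1; 2; 2; 2; 3; 0]);
 ([:: 83; 82], [:: 1; 2; 1; 1; 1]);
 ([:: 84; 78], [:: 0; 1; 1; 2; 3; 0]);
 ([:: 84; 88], [:: 3; 3; 2; 1]);
 ([:: 84; 90], [:: 1; 1; 2; 1]);
 ([:: 85; 7], [:: 2; 3; 3; 2]);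
 ([:: 85; 61], [:: 3; 3; 0; 3; 2]);
 ([:: 85; 88], [:: 0; 3; 2; 3]);
 ([:: 86; 74], [:: 1; 2; 2; 3]);
 ([:: 86; 89], [:: 1; 0; 1; 0; 3]);
 ([:: 86; 98], [:: 2; 1; 2; 2; 1]);
 ([:: 87; 33], [:: 1; 1; 1; 1]);
 ([:: 87; 39], [:: 3; 2; 2; 2; 3]);
 ([:: 87; 89], [:: 0; 3]);
 ([:: 88; 84], [:: 0; 1; 0; 3; 0]);
 ([:: 88; 85], [:: 1; 0; 3; 3; 3; 0]);
 ([:: 88; 89], [:: 3; 2; 3; 0; 3]);
 ([:: 89; 86], [:: 3; 0; 1]);
 ([:: 89; 87], [:: 1; 1; 2; 1; 0]);
 ([:: 89; 88], [:: 1; 0; 0; 1]);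
 ([:: 90; 84], [:: 0; 3; 2; 3; 2; 3]);
 ([:: 90; 94], [:: 3; 0; 0; 1; 1]);
 ([:: 90; 96], [:: 1; 0; 1; 2; 2]);
 ([:: 91; 13], [:: 0; 0; 1; 1; 1]);
 ([:: 91; 67], [:: 0; 1; 2; 1; 1]);
 ([:: 91; 94], [:: 3; 0]);
 ([:: 92; 2], [:: 0; 3; 0; 0]);
 ([:: 92; 80], [:: 2; 1; 2; 3]);
 ([:: 92; 95], [:: 3; 3]);
 ([:: 93; 39], [:: 1; 0; 0; 0; 1; 0]);
 ([:: 93; 45], [:: 0; 3; 0]);
 ([:: 93; 95], [:: 1; 1; 1; 1; 2]);
 ([:: 94; 90], [:: 1; 2; 3; 2; 2]);
 ([:: 94; 91], [:: 1; 1; 0; 3; 2]);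
 ([:: 94; 95], [:: 3; 3; 0; 1; 1]);
 ([:: 95; 92], [:: 2; 2; 1; 1; 2]);
 ([:: 95; 93], [:: 1; 0; 1; 2]);
 ([:: 95; 94], [:: 3; 0; 3; 3; 2]);
 ([:: 96; 0], [:: 0; 1; 1; 2; 3]);
 ([:: 96; 90], [:: 2; 2; 2; 2]);
 ([:: 96; 100], [:: 1; 1; 1; 0; 1]);
 ([:: 97; 19], [:: 3; 0; 1; 1]);
 ([:: 97; 73], [:: 2; 1; 2; 2; 3]);
 ([:: 97; 100], [:: 2; 2; 1; 2; 2; 1]);
 ([:: 98; 8], [:: 3; 2; 1; 2; 1]);
 ([:: 98; 86], [:: 0; 0]);
 ([:: 98; 101], [:: 1; 2; 3; 3]);
 ([:: 99; 45], [:: 3; 0; 0; 0; 3]);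
 ([:: 99; 51], [:: 3; 0; 3; 2; 3; 3]);
 ([:: 99; 101], [:: 0; 1; 0; 1; 2; 2]);
 ([:: 100; 96], [:: 2; 1; 2; 3; 3]);
 ([:: 100; 97], [:: 0]);
 ([:: 100; 101], [:: 2; 3; 2; 1; 2; 1]);
 ([:: 101; 98], [:: 3; 0; 1; 1; 0]);
 ([:: 101; 99], [:: 2; 2; 2]);
 ([:: 101; 100], [:: 3; 2; 2; 1; 2])].
Definition w1tbl : seq (seq nat) := [:: [:: ];
 [:: ];
 [:: ];
 [:: 1; 0; 1; 0; 3; 2; 2; 1];
 [:: ];
 [:: 1; 0; 0; 1; 1; 1; 0];
 [:: ];
 [:: ];
 [:: ];
 [:: ];
 [:: ];
 [:: 0; 0; 1; 2; 1; 0; 1];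
 [:: 0; 0; 1; 1; 0; 3; 0; 1];
 [:: 0; 0; 1; 1; 0; 3; 0; 1];
 [:: ];
 [:: ];
 [:: 0; 0; 0; 3; 3; 0; 0; 3];
 [:: 0; 0; 1; 1; 0; 3; 0; 1];
 [:: 0; 0; 1; 1; 0; 3; 0; 1];
 [:: 1; 0; 0; 1; 1; 1; 0];
 [:: ];
 [:: ];
 [:: 0; 0; 0; 3; 3; 0; 0; 3];
 [:: 0; 0; 0; 3; 3; 0; 0; 3];
 [:: 0; 0; 0; 3; 3; 0; 0; 3];
 [:: 0; 3; 2; 2; 2; 3; 3];
 [:: ];
 [:: ];
 [:: 0; 0; 1; 2; 1; 0; 1];
 [:: 0; 0; 1; 2; 1; 0; 1];
 [:: 0; 0; 1; 2; 1; 0; 1];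
 [:: 0; 0; 1; 2; 1; 0; 1];
 [:: 0; 0; 0; 3; 3; 0; 0; 3];
 [:: ];
 [:: 0; 0; 0; 3; 3; 0; 0; 3];
 [:: ];
 [:: 0; 0; 1; 1; 0; 3; 0; 1];
 [:: 0; 0; 1; 1; 0; 3; 0; 1];
 [:: 0; 0; 1; 2; 1; 0; 1];
 [:: 0; 3; 2; 2; 2; 3; 3];
 [:: 0; 0; 1; 2; 1; 0; 1];
 [:: 0; 3; 2; 2; 2; 3; 3];
 [:: 0; 0; 1; 1; 0; 3; 0; 1];
 [:: 1; 0; 0; 1; 1; 1; 0];
 [:: 1; 0; 0; 1; 1; 1; 0];
 [:: 1; 0; 1; 0; 3; 2; 2; 1];
 [:: 1; 0; 1; 0; 3; 2; 2; 1];
 [:: 1; 0; 0; 1; 1; 1; 0];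
 [:: 1; 0; 1; 0; 3; 2; 2; 1];
 [:: 0; 3; 2; 2; 2; 3; 3];
 [:: 0; 3; 2; 2; 2; 3; 3];
 [:: 1; 0; 1; 0; 3; 2; 2; 1];
 [:: 0; 3; 2; 2; 2; 3; 3];
 [:: 1; 0; 1; 0; 3; 2; 2; 1];
 [:: 0; 0; 1; 1; 0; 3; 0; 1];
 [:: 0; 0; 0; 3; 3; 0; 0; 3];
 [:: 0; 0; 0; 3; 3; 0; 0; 3];
 [:: 0; 0; 1; 1; 0; 3; 0; 1];
 [:: 0; 0; 0; 3; 3; 0; 0; 3];
 [:: 0; 0; 1; 1; 0; 3; 0; 1];
 [:: 1; 0; 1; 0; 3; 2; 2; 1];
 [:: 0; 0; 1; 2; 1; 0; 1];
 [:: 0; 0; 1; 2; 1; 0; 1];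
 [:: 0; 0; 1; 1; 0; 3; 0; 1];
 [:: 0; 0; 1; 1; 0; 3; 0; 1];
 [:: 0; 0; 1; 2; 1; 0; 1];
 [:: 1; 0; 1; 0; 3; 2; 2; 1];
 [:: 1; 0; 1; 0; 3; 2; 2; 1];
 [:: 1; 0; 0; 1; 1; 1; 0];
 [:: 0; 0; 0; 3; 3; 0; 0; 3];
 [:: 1; 0; 0; 1; 1; 1; 0];
 [:: 0; 0; 0; 3; 3; 0; 0; 3];
 [:: 1; 0; 0; 1; 1; 1; 0];
 [:: 1; 0; 0; 1; 1; 1; 0];
 [:: 0; 3; 2; 2; 2; 3; 3];
 [:: 0; 1; 1; 2; 2; 3; 0; 1];
 [:: 0; 3; 2; 2; 2; 3; 3];
 [:: 0; 1; 1; 2; 2; 3; 0; 1];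
 [:: 0; 3; 2; 2; 2; 3; 3];
 [:: 1; 0; 0; 1; 1; 1; 0];
 [:: 0; 1; 1; 2; 2; 3; 0; 1];
 [:: 0; 1; 1; 2; 2; 3; 0; 1];
 [:: 1; 0; 0; 1; 1; 1; 0];
 [:: 1; 0; 0; 1; 1; 1; 0];
 [:: 1; 0; 1; 0; 3; 2; 2; 1];
 [:: 0; 0; 1; 2; 1; 0; 1];
 [:: 0; 1; 1; 2; 2; 3; 0; 1];
 [:: 0; 1; 1; 2; 2; 3; 0; 1];
 [:: 0; 3; 2; 2; 2; 3; 3];
 [:: 0; 3; 2; 2; 2; 3; 3];
 [:: 0; 3; 2; 2; 2; 3; 3];
 [:: 1; 0; 1; 0; 3; 2; 2; 1];
 [:: 0; 1; 1; 2; 2; 3; 0; 1];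
 [:: 0; 1; 1; 2; 2; 3; 0; 1];
 [:: 0; 3; 2; 2; 2; 3; 3];
 [:: 1; 0; 1; 0; 3; 2; 2; 1];
 [:: 1; 0; 0; 1; 1; 1; 0];
 [:: 0; 1; 1; 2; 2; 3; 0; 1];
 [:: 0; 1; 1; 2; 2; 3; 0; 1];
 [:: 0; 1; 1; 2; 2; 3; 0; 1];
 [:: 1; 0; 0; 1; 1; 1; 0];
 [:: 1; 0; 0; 1; 1; 1; 0]].
Definition rep1tbl : seq (seq nat * nat) := [:: ([:: 0; 1], 0); ([:: 2; 1], 1); ([:: 3; 2], 2); ([:: 1; 0], 4); ([:: 1; 2], 6); ([:: 3; 4], 7); ([:: 4; 5], 8); ([:: 4; 4], 9); ([:: 2; 3], 10); ([:: 4; 3], 14); ([:: 5; 5], 15); ([:: 5; 6], 20); ([:: 6; 7], 21); ([:: 5; 4], 26); ([:: 6; 5], 27); ([:: 7; 6], 33); ([:: 6; 6], 35)].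
Definition w2tbl : seq (seq nat * seq nat) := [:: ([:: 0; 4], [:: ]);
 ([:: 0; 6], [:: ]);
 ([:: 0; 96], [:: 1; 0; 0; 1; 1; 1; 0]);
 ([:: 1; 4], [:: ]);
 ([:: 1; 25], [:: ]);
 ([:: 1; 79], [:: 0; 1; 1; 2; 2; 3; 0; 1]);
 ([:: 2; 5], [:: ]);
 ([:: 2; 14], [:: ]);
 ([:: 2; 92], [:: 0; 1; 1; 2; 2; 3; 0; 1]);
 ([:: 3; 5], [:: 1; 0; 1; 0; 3; 2; 2; 1]);
 ([:: 3; 51], [:: 1; 0; 1; 0; 3; 2; 2; 1]);
 ([:: 3; 57], [:: 0; 0; 1; 1; 0; 3; 0; 1]);
 ([:: 4; 0], [:: ]);
 ([:: 4; 1], [:: ]);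
 ([:: 4; 5], [:: 1; 0; 0; 1; 1; 1; 0]);
 ([:: 5; 2], [:: 1; 0; 0; 1; 1; 1; 0]);
 ([:: 5; 3], [:: 0; 3; 2; 2; 2; 3; 3]);
 ([:: 5; 4], [:: 1; 0; 0; 1; 1; 1; 0]);
 ([:: 6; 0], [:: ]);
 ([:: 6; 10], [:: ]);
 ([:: 6; 12], [:: 0; 0; 1; 1; 0; 3; 0; 1]);
 ([:: 7; 10], [:: ]);
 ([:: 7; 31], [:: ]);
 ([:: 7; 85], [:: ]);
 ([:: 8; 11], [:: ]);
 ([:: 8; 20], [:: ]);
 ([:: 8; 98], [:: ]);
 ([:: 9; 11], [:: ]);
 ([:: 9; 57], [:: ]);
 ([:: 9; 63], [:: ]);
 ([:: 10; 6], [:: ]);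
 ([:: 10; 7], [:: ]);
 ([:: 10; 11], [:: 0; 0; 1; 2; 1; 0; 1]);
 ([:: 11; 8], [:: 0; 0; 1; 2; 1; 0; 1]);
 ([:: 11; 9], [:: 0; 0; 1; 2; 1; 0; 1]);
 ([:: 11; 10], [:: 0; 0; 1; 2; 1; 0; 1]);
 ([:: 12; 6], [:: 0; 0; 1; 1; 0; 3; 0; 1]);
 ([:: 12; 16], [:: 0; 0; 0; 3; 3; 0; 0; 3]);
 ([:: 12; 18], [:: 0; 0; 1; 1; 0; 3; 0; 1]);
 ([:: 13; 16], [:: 0; 0; 1; 1; 0; 3; 0; 1]);
 ([:: 13; 37], [:: 0; 0; 1; 1; 0; 3; 0; 1]);
 ([:: 13; 91], [:: 0; 0; 1; 1; 0; 3; 0; 1]);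
 ([:: 14; 2], [:: ]);
 ([:: 14; 17], [:: ]);
 ([:: 14; 26], [:: ]);
 ([:: 15; 17], [:: ]);
 ([:: 15; 63], [:: ]);
 ([:: 15; 69], [:: ]);
 ([:: 16; 12], [:: 0; 0; 0; 3; 3; 0; 0; 3]);
 ([:: 16; 13], [:: 0; 0; 0; 3; 3; 0; 0; 3]);
 ([:: 16; 17], [:: 0; 0; 0; 3; 3; 0; 0; 3]);
 ([:: 17; 14], [:: 0; 0; 1; 1; 0; 3; 0; 1]);
 ([:: 17; 15], [:: 0; 0; 1; 1; 0; 3; 0; 1]);
 ([:: 17; 16], [:: 0; 0; 1; 1; 0; 3; 0; 1]);
 ([:: 18; 12], [:: 0; 0; 1; 1; 0; 3; 0; 1]);
 ([:: 18; 22], [:: 0; 0; 1; 1; 0; 3; 0; 1]);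
 ([:: 18; 24], [:: 0; 0; 1; 1; 0; 3; 0; 1]);
 ([:: 19; 22], [:: 1; 0; 0; 1; 1; 1; 0]);
 ([:: 19; 43], [:: 1; 0; 0; 1; 1; 1; 0]);
 ([:: 19; 97], [:: 1; 0; 0; 1; 1; 1; 0]);
 ([:: 20; 8], [:: ]);
 ([:: 20; 23], [:: ]);
 ([:: 20; 32], [:: ]);
 ([:: 21; 23], [:: ]);
 ([:: 21; 69], [:: ]);
 ([:: 21; 75], [:: ]);
 ([:: 22; 18], [:: 0; 0; 0; 3; 3; 0; 0; 3]);
 ([:: 22; 19], [:: 0; 0; 0; 3; 3; 0; 0; 3]);
 ([:: 22; 23], [:: 0; 0; 0; 3; 3; 0; 0; 3]);
 ([:: 23; 20], [:: 0; 0; 0; 3; 3; 0; 0; 3]);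
 ([:: 23; 21], [:: 0; 0; 0; 3; 3; 0; 0; 3]);
 ([:: 23; 22], [:: 0; 0; 0; 3; 3; 0; 0; 3]);
 ([:: 24; 18], [:: 0; 0; 0; 3; 3; 0; 0; 3]);
 ([:: 24; 28], [:: 0; 0; 0; 3; 3; 0; 0; 3]);
 ([:: 24; 30], [:: 0; 0; 0; 3; 3; 0; 0; 3]);
 ([:: 25; 1], [:: 0; 3; 2; 2; 2; 3; 3]);
 ([:: 25; 28], [:: 0; 0; 1; 2; 1; 0; 1]);
 ([:: 25; 49], [:: 0; 3; 2; 2; 2; 3; 3]);
 ([:: 26; 14], [:: ]);
 ([:: 26; 29], [:: ]);
 ([:: 26; 38], [:: ]);
 ([:: 27; 29], [:: ]);
 ([:: 27; 75], [:: ]);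
 ([:: 27; 81], [:: ]);
 ([:: 28; 24], [:: 0; 0; 1; 2; 1; 0; 1]);
 ([:: 28; 25], [:: 0; 0; 1; 2; 1; 0; 1]);
 ([:: 28; 29], [:: 0; 0; 1; 2; 1; 0; 1]);
 ([:: 29; 26], [:: 0; 0; 1; 2; 1; 0; 1]);
 ([:: 29; 27], [:: 0; 0; 1; 2; 1; 0; 1]);
 ([:: 29; 28], [:: 0; 0; 1; 2; 1; 0; 1]);
 ([:: 30; 24], [:: 0; 0; 1; 2; 1; 0; 1]);
 ([:: 30; 34], [:: 0; 0; 1; 2; 1; 0; 1]);
 ([:: 30; 36], [:: 0; 0; 1; 2; 1; 0; 1]);
 ([:: 31; 7], [:: 0; 0; 1; 2; 1; 0; 1]);
 ([:: 31; 34], [:: 0; 0; 1; 2; 1; 0; 1]);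
 ([:: 31; 55], [:: 0; 0; 1; 2; 1; 0; 1]);
 ([:: 32; 20], [:: 0; 0; 0; 3; 3; 0; 0; 3]);
 ([:: 32; 35], [:: 0; 0; 0; 3; 3; 0; 0; 3]);
 ([:: 32; 44], [:: 0; 0; 0; 3; 3; 0; 0; 3]);
 ([:: 33; 35], [:: ]);
 ([:: 33; 81], [:: ]);
 ([:: 33; 87], [:: ]);
 ([:: 34; 30], [:: 0; 0; 0; 3; 3; 0; 0; 3]);
 ([:: 34; 31], [:: 0; 0; 0; 3; 3; 0; 0; 3]);
 ([:: 34; 35], [:: 0; 0; 0; 3; 3; 0; 0; 3]);
 ([:: 35; 32], [:: ]);
 ([:: 35; 33], [:: ]);
 ([:: 35; 34], [:: ]);
 ([:: 36; 30], [:: 0; 0; 1; 1; 0; 3; 0; 1]);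
 ([:: 36; 40], [:: 0; 0; 1; 1; 0; 3; 0; 1]);
 ([:: 36; 42], [:: 0; 0; 1; 1; 0; 3; 0; 1]);
 ([:: 37; 13], [:: 0; 0; 1; 1; 0; 3; 0; 1]);
 ([:: 37; 40], [:: 0; 0; 1; 1; 0; 3; 0; 1]);
 ([:: 37; 61], [:: 0; 0; 1; 1; 0; 3; 0; 1]);
 ([:: 38; 26], [:: 0; 0; 1; 2; 1; 0; 1]);
 ([:: 38; 41], [:: 0; 0; 1; 2; 1; 0; 1]);
 ([:: 38; 50], [:: 0; 0; 1; 2; 1; 0; 1]);
 ([:: 39; 41], [:: 0; 3; 2; 2; 2; 3; 3]);
 ([:: 39; 87], [:: 0; 3; 2; 2; 2; 3; 3]);
 ([:: 39; 93], [:: 0; 3; 2; 2; 2; 3; 3]);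
 ([:: 40; 36], [:: 0; 0; 1; 2; 1; 0; 1]);
 ([:: 40; 37], [:: 0; 0; 1; 2; 1; 0; 1]);
 ([:: 40; 41], [:: 0; 0; 1; 2; 1; 0; 1]);
 ([:: 41; 38], [:: 0; 3; 2; 2; 2; 3; 3]);
 ([:: 41; 39], [:: 0; 3; 2; 2; 2; 3; 3]);
 ([:: 41; 40], [:: 0; 3; 2; 2; 2; 3; 3]);
 ([:: 42; 36], [:: 0; 0; 1; 1; 0; 3; 0; 1]);
 ([:: 42; 46], [:: 0; 0; 1; 1; 0; 3; 0; 1]);
 ([:: 42; 48], [:: 0; 0; 1; 1; 0; 3; 0; 1]);
 ([:: 43; 19], [:: 1; 0; 0; 1; 1; 1; 0]);
 ([:: 43; 46], [:: 1; 0; 0; 1; 1; 1; 0]);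
 ([:: 43; 67], [:: 1; 0; 0; 1; 1; 1; 0]);
 ([:: 44; 32], [:: 1; 0; 0; 1; 1; 1; 0]);
 ([:: 44; 47], [:: 1; 0; 0; 1; 1; 1; 0]);
 ([:: 44; 56], [:: 1; 0; 0; 1; 1; 1; 0]);
 ([:: 45; 47], [:: 1; 0; 1; 0; 3; 2; 2; 1]);
 ([:: 45; 93], [:: 1; 0; 1; 0; 3; 2; 2; 1]);
 ([:: 45; 99], [:: 1; 0; 1; 0; 3; 2; 2; 1]);
 ([:: 46; 42], [:: 1; 0; 1; 0; 3; 2; 2; 1]);
 ([:: 46; 43], [:: 1; 0; 1; 0; 3; 2; 2; 1]);
 ([:: 46; 47], [:: 1; 0; 1; 0; 3; 2; 2; 1]);
 ([:: 47; 44], [:: 1; 0; 0; 1; 1; 1; 0]);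
 ([:: 47; 45], [:: 1; 0; 0; 1; 1; 1; 0]);
 ([:: 47; 46], [:: 1; 0; 0; 1; 1; 1; 0]);
 ([:: 48; 42], [:: 1; 0; 1; 0; 3; 2; 2; 1]);
 ([:: 48; 52], [:: 1; 0; 1; 0; 3; 2; 2; 1]);
 ([:: 48; 54], [:: 1; 0; 1; 0; 3; 2; 2; 1]);
 ([:: 49; 25], [:: 0; 3; 2; 2; 2; 3; 3]);
 ([:: 49; 52], [:: 0; 3; 2; 2; 2; 3; 3]);
 ([:: 49; 73], [:: 0; 3; 2; 2; 2; 3; 3]);
 ([:: 50; 38], [:: 0; 3; 2; 2; 2; 3; 3]);
 ([:: 50; 53], [:: 0; 3; 2; 2; 2; 3; 3]);
 ([:: 50; 62], [:: 0; 3; 2; 2; 2; 3; 3]);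
 ([:: 51; 3], [:: 1; 0; 1; 0; 3; 2; 2; 1]);
 ([:: 51; 53], [:: 1; 0; 1; 0; 3; 2; 2; 1]);
 ([:: 51; 99], [:: 1; 0; 1; 0; 3; 2; 2; 1]);
 ([:: 52; 48], [:: 0; 3; 2; 2; 2; 3; 3]);
 ([:: 52; 49], [:: 0; 3; 2; 2; 2; 3; 3]);
 ([:: 52; 53], [:: 0; 3; 2; 2; 2; 3; 3]);
 ([:: 53; 50], [:: 1; 0; 1; 0; 3; 2; 2; 1]);
 ([:: 53; 51], [:: 1; 0; 1; 0; 3; 2; 2; 1]);
 ([:: 53; 52], [:: 1; 0; 1; 0; 3; 2; 2; 1]);
 ([:: 54; 48], [:: 0; 0; 1; 1; 0; 3; 0; 1]);
 ([:: 54; 58], [:: 0; 0; 1; 1; 0; 3; 0; 1]);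
 ([:: 54; 60], [:: 0; 0; 1; 1; 0; 3; 0; 1]);
 ([:: 55; 31], [:: 0; 0; 0; 3; 3; 0; 0; 3]);
 ([:: 55; 58], [:: 0; 0; 0; 3; 3; 0; 0; 3]);
 ([:: 55; 79], [:: 0; 0; 0; 3; 3; 0; 0; 3]);
 ([:: 56; 44], [:: 0; 0; 0; 3; 3; 0; 0; 3]);
 ([:: 56; 59], [:: 0; 0; 0; 3; 3; 0; 0; 3]);
 ([:: 56; 68], [:: 0; 0; 0; 3; 3; 0; 0; 3]);
 ([:: 57; 3], [:: 0; 0; 1; 1; 0; 3; 0; 1]);
 ([:: 57; 9], [:: 0; 0; 1; 1; 0; 3; 0; 1]);
 ([:: 57; 59], [:: 0; 0; 1; 1; 0; 3; 0; 1]);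
 ([:: 58; 54], [:: 0; 0; 0; 3; 3; 0; 0; 3]);
 ([:: 58; 55], [:: 0; 0; 0; 3; 3; 0; 0; 3]);
 ([:: 58; 59], [:: 0; 0; 0; 3; 3; 0; 0; 3]);
 ([:: 59; 56], [:: 0; 0; 1; 1; 0; 3; 0; 1]);
 ([:: 59; 57], [:: 0; 0; 1; 1; 0; 3; 0; 1]);
 ([:: 59; 58], [:: 0; 0; 1; 1; 0; 3; 0; 1]);
 ([:: 60; 54], [:: 1; 0; 1; 0; 3; 2; 2; 1]);
 ([:: 60; 64], [:: 1; 0; 1; 0; 3; 2; 2; 1]);
 ([:: 60; 66], [:: 1; 0; 1; 0; 3; 2; 2; 1]);
 ([:: 61; 37], [:: 0; 0; 1; 2; 1; 0; 1]);
 ([:: 61; 64], [:: 0; 0; 1; 2; 1; 0; 1]);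
 ([:: 61; 85], [:: 0; 0; 1; 2; 1; 0; 1]);
 ([:: 62; 50], [:: 0; 0; 1; 2; 1; 0; 1]);
 ([:: 62; 65], [:: 0; 0; 1; 2; 1; 0; 1]);
 ([:: 62; 74], [:: 0; 0; 1; 2; 1; 0; 1]);
 ([:: 63; 9], [:: 0; 0; 1; 1; 0; 3; 0; 1]);
 ([:: 63; 15], [:: 0; 0; 1; 1; 0; 3; 0; 1]);
 ([:: 63; 65], [:: 0; 0; 1; 1; 0; 3; 0; 1]);
 ([:: 64; 60], [:: 0; 0; 1; 1; 0; 3; 0; 1]);
 ([:: 64; 61], [:: 0; 0; 1; 1; 0; 3; 0; 1]);
 ([:: 64; 65], [:: 0; 0; 1; 1; 0; 3; 0; 1]);
 ([:: 65; 62], [:: 0; 0; 1; 2; 1; 0; 1]);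
 ([:: 65; 63], [:: 0; 0; 1; 2; 1; 0; 1]);
 ([:: 65; 64], [:: 0; 0; 1; 2; 1; 0; 1]);
 ([:: 66; 60], [:: 1; 0; 1; 0; 3; 2; 2; 1]);
 ([:: 66; 70], [:: 1; 0; 1; 0; 3; 2; 2; 1]);
 ([:: 66; 72], [:: 1; 0; 1; 0; 3; 2; 2; 1]);
 ([:: 67; 43], [:: 1; 0; 1; 0; 3; 2; 2; 1]);
 ([:: 67; 70], [:: 1; 0; 1; 0; 3; 2; 2; 1]);
 ([:: 67; 91], [:: 1; 0; 1; 0; 3; 2; 2; 1]);
 ([:: 68; 56], [:: 1; 0; 0; 1; 1; 1; 0]);
 ([:: 68; 71], [:: 1; 0; 0; 1; 1; 1; 0]);
 ([:: 68; 80], [:: 1; 0; 0; 1; 1; 1; 0]);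
 ([:: 69; 15], [:: 0; 0; 0; 3; 3; 0; 0; 3]);
 ([:: 69; 21], [:: 0; 0; 0; 3; 3; 0; 0; 3]);
 ([:: 69; 71], [:: 0; 0; 0; 3; 3; 0; 0; 3]);
 ([:: 70; 66], [:: 1; 0; 0; 1; 1; 1; 0]);
 ([:: 70; 67], [:: 1; 0; 0; 1; 1; 1; 0]);
 ([:: 70; 71], [:: 1; 0; 0; 1; 1; 1; 0]);
 ([:: 71; 68], [:: 0; 0; 0; 3; 3; 0; 0; 3]);
 ([:: 71; 69], [:: 0; 0; 0; 3; 3; 0; 0; 3]);
 ([:: 71; 70], [:: 0; 0; 0; 3; 3; 0; 0; 3]);
 ([:: 72; 66], [:: 1; 0; 0; 1; 1; 1; 0]);
 ([:: 72; 76], [:: 1; 0; 0; 1; 1; 1; 0]);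
 ([:: 72; 78], [:: 1; 0; 0; 1; 1; 1; 0]);
 ([:: 73; 49], [:: 1; 0; 0; 1; 1; 1; 0]);
 ([:: 73; 76], [:: 1; 0; 0; 1; 1; 1; 0]);
 ([:: 73; 97], [:: 1; 0; 0; 1; 1; 1; 0]);
 ([:: 74; 62], [:: 0; 3; 2; 2; 2; 3; 3]);
 ([:: 74; 77], [:: 0; 3; 2; 2; 2; 3; 3]);
 ([:: 74; 86], [:: 0; 3; 2; 2; 2; 3; 3]);
 ([:: 75; 21], [:: 0; 1; 1; 2; 2; 3; 0; 1]);
 ([:: 75; 27], [:: 0; 1; 1; 2; 2; 3; 0; 1]);
 ([:: 75; 77], [:: 0; 1; 1; 2; 2; 3; 0; 1]);
 ([:: 76; 72], [:: 0; 3; 2; 2; 2; 3; 3]);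
 ([:: 76; 73], [:: 0; 3; 2; 2; 2; 3; 3]);
 ([:: 76; 77], [:: 0; 3; 2; 2; 2; 3; 3]);
 ([:: 77; 74], [:: 0; 1; 1; 2; 2; 3; 0; 1]);
 ([:: 77; 75], [:: 0; 1; 1; 2; 2; 3; 0; 1]);
 ([:: 77; 76], [:: 0; 1; 1; 2; 2; 3; 0; 1]);
 ([:: 78; 72], [:: 0; 3; 2; 2; 2; 3; 3]);
 ([:: 78; 82], [:: 0; 3; 2; 2; 2; 3; 3]);
 ([:: 78; 84], [:: 0; 3; 2; 2; 2; 3; 3]);
 ([:: 79; 1], [:: 1; 0; 0; 1; 1; 1; 0]);
 ([:: 79; 55], [:: 0; 0; 0; 3; 3; 0; 0; 3]);
 ([:: 79; 82], [:: 1; 0; 0; 1; 1; 1; 0]);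
 ([:: 80; 68], [:: 0; 1; 1; 2; 2; 3; 0; 1]);
 ([:: 80; 83], [:: 0; 1; 1; 2; 2; 3; 0; 1]);
 ([:: 80; 92], [:: 0; 1; 1; 2; 2; 3; 0; 1]);
 ([:: 81; 27], [:: 0; 1; 1; 2; 2; 3; 0; 1]);
 ([:: 81; 33], [:: 0; 1; 1; 2; 2; 3; 0; 1]);
 ([:: 81; 83], [:: 0; 1; 1; 2; 2; 3; 0; 1]);
 ([:: 82; 78], [:: 1; 0; 0; 1; 1; 1; 0]);
 ([:: 82; 79], [:: 1; 0; 0; 1; 1; 1; 0]);
 ([:: 82; 83], [:: 1; 0; 0; 1; 1; 1; 0]);
 ([:: 83; 80], [:: 1; 0; 0; 1; 1; 1; 0]);
 ([:: 83; 81], [:: 1; 0; 0; 1; 1; 1; 0]);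
 ([:: 83; 82], [:: 1; 0; 0; 1; 1; 1; 0]);
 ([:: 84; 78], [:: 1; 0; 1; 0; 3; 2; 2; 1]);
 ([:: 84; 88], [:: 1; 0; 1; 0; 3; 2; 2; 1]);
 ([:: 84; 90], [:: 1; 0; 1; 0; 3; 2; 2; 1]);
 ([:: 85; 7], [:: 0; 0; 1; 2; 1; 0; 1]);
 ([:: 85; 61], [:: 0; 0; 1; 2; 1; 0; 1]);
 ([:: 85; 88], [:: 0; 0; 1; 2; 1; 0; 1]);
 ([:: 86; 74], [:: 0; 1; 1; 2; 2; 3; 0; 1]);
 ([:: 86; 89], [:: 0; 1; 1; 2; 2; 3; 0; 1]);
 ([:: 86; 98], [:: 0; 1; 1; 2; 2; 3; 0; 1]);
 ([:: 87; 33], [:: 0; 1; 1; 2; 2; 3; 0; 1]);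
 ([:: 87; 39], [:: 0; 1; 1; 2; 2; 3; 0; 1]);
 ([:: 87; 89], [:: 0; 1; 1; 2; 2; 3; 0; 1]);
 ([:: 88; 84], [:: 0; 3; 2; 2; 2; 3; 3]);
 ([:: 88; 85], [:: 0; 3; 2; 2; 2; 3; 3]);
 ([:: 88; 89], [:: 0; 3; 2; 2; 2; 3; 3]);
 ([:: 89; 86], [:: 0; 3; 2; 2; 2; 3; 3]);
 ([:: 89; 87], [:: 0; 3; 2; 2; 2; 3; 3]);
 ([:: 89; 88], [:: 0; 3; 2; 2; 2; 3; 3]);
 ([:: 90; 84], [:: 1; 0; 1; 0; 3; 2; 2; 1]);
 ([:: 90; 94], [:: 0; 3; 2; 2; 2; 3; 3]);
 ([:: 90; 96], [:: 0; 3; 2; 2; 2; 3; 3]);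
 ([:: 91; 13], [:: 1; 0; 1; 0; 3; 2; 2; 1]);
 ([:: 91; 67], [:: 1; 0; 1; 0; 3; 2; 2; 1]);
 ([:: 91; 94], [:: 1; 0; 1; 0; 3; 2; 2; 1]);
 ([:: 92; 2], [:: 0; 1; 1; 2; 2; 3; 0; 1]);
 ([:: 92; 80], [:: 0; 1; 1; 2; 2; 3; 0; 1]);
 ([:: 92; 95], [:: 0; 1; 1; 2; 2; 3; 0; 1]);
 ([:: 93; 39], [:: 0; 1; 1; 2; 2; 3; 0; 1]);
 ([:: 93; 45], [:: 0; 1; 1; 2; 2; 3; 0; 1]);
 ([:: 93; 95], [:: 0; 1; 1; 2; 2; 3; 0; 1]);
 ([:: 94; 90], [:: 0; 3; 2; 2; 2; 3; 3]);
 ([:: 94; 91], [:: 0; 3; 2; 2; 2; 3; 3]);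
 ([:: 94; 95], [:: 0; 3; 2; 2; 2; 3; 3]);
 ([:: 95; 92], [:: 1; 0; 1; 0; 3; 2; 2; 1]);
 ([:: 95; 93], [:: 1; 0; 1; 0; 3; 2; 2; 1]);
 ([:: 95; 94], [:: 1; 0; 1; 0; 3; 2; 2; 1]);
 ([:: 96; 0], [:: 1; 0; 0; 1; 1; 1; 0]);
 ([:: 96; 90], [:: 0; 3; 2; 2; 2; 3; 3]);
 ([:: 96; 100], [:: 1; 0; 0; 1; 1; 1; 0]);
 ([:: 97; 19], [:: 0; 1; 1; 2; 2; 3; 0; 1]);
 ([:: 97; 73], [:: 0; 1; 1; 2; 2; 3; 0; 1]);
 ([:: 97; 100], [:: 0; 1; 1; 2; 2; 3; 0; 1]);
 ([:: 98; 8], [:: 0; 1; 1; 2; 2; 3; 0; 1]);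
 ([:: 98; 86], [:: 0; 1; 1; 2; 2; 3; 0; 1]);
 ([:: 98; 101], [:: 0; 1; 1; 2; 2; 3; 0; 1]);
 ([:: 99; 45], [:: 0; 1; 1; 2; 2; 3; 0; 1]);
 ([:: 99; 51], [:: 0; 1; 1; 2; 2; 3; 0; 1]);
 ([:: 99; 101], [:: 0; 1; 1; 2; 2; 3; 0; 1]);
 ([:: 100; 96], [:: 1; 0; 0; 1; 1; 1; 0]);
 ([:: 100; 97], [:: 0; 1; 1; 2; 2; 3; 0; 1]);
 ([:: 100; 101], [:: 1; 0; 0; 1; 1; 1; 0]);
 ([:: 101; 98], [:: 1; 0; 0; 1; 1; 1; 0]);
 ([:: 101; 99], [:: 1; 0; 0; 1; 1; 1; 0]);
 ([:: 101; 100], [:: 1; 0; 0; 1; 1; 1; 0])].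
Definition rep2tbl : seq (seq nat * seq nat) := [:: ([:: 0; 1; 1; 0], [:: 0; 4]); ([:: 0; 1; 1; 2], [:: 0; 6]); ([:: 2; 1; 1; 0], [:: 1; 4]); ([:: 2; 3; 1; 2], [:: 1; 25]); ([:: 3; 2; 2; 1], [:: 2; 5]); ([:: 3; 4; 2; 3], [:: 2; 14]); ([:: 1; 0; 0; 1], [:: 4; 0]); ([:: 1; 2; 0; 1], [:: 4; 1]); ([:: 1; 0; 2; 1], [:: 6; 0]); ([:: 1; 2; 2; 3], [:: 6; 10]); ([:: 3; 2; 4; 3], [:: 7; 10]); ([:: 3; 4; 4; 4], [:: 7; 31]); ([:: 3; 4; 4; 5], [:: 7; 85]); ([:: 4; 3; 5; 4], [:: 8; 11]); ([:: 4; 5; 5; 6], [:: 8; 20]); ([:: 4; 4; 5; 5], [:: 8; 98]); ([:: 4; 3; 4; 4], [:: 9; 11]); ([:: 4; 4; 4; 3], [:: 9; 57]); ([:: 4; 5; 4; 5], [:: 9; 63]); ([:: 2; 1; 3; 2], [:: 10; 6]); ([:: 2; 3; 3; 4], [:: 10; 7]); ([:: 4; 3; 3; 2], [:: 14; 2]); ([:: 4; 4; 3; 4], [:: 14; 17]); ([:: 4; 5; 3; 4], [:: 14; 26]); ([:: 5; 4; 5; 4], [:: 15; 17]); ([:: 5; 5; 5; 5], [:: 15; 63]); ([:: 5; 6; 5; 6], [:: 15; 69]); ([:: 5; 4; 6; 5], [:: 20; 8]); ([:: 5; 5; 6; 6], [:: 20; 23]); ([:: 5; 6; 6; 7], [::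 20; 32]); ([:: 6; 5; 7; 6], [:: 21; 23]); ([:: 6; 6; 7; 6], [:: 21; 69]); ([:: 6; 7; 7; 6], [:: 21; 75]); ([:: 5; 4; 4; 3], [:: 26; 14]); ([:: 5; 5; 4; 4], [:: 26; 29]); ([:: 5; 6; 4; 5], [:: 26; 38]); ([:: 6; 5; 5; 4], [:: 27; 29]); ([:: 6; 7; 5; 6], [:: 27; 75]); ([:: 6; 6; 5; 5], [:: 27; 81]); ([:: 7; 6; 6; 6], [:: 33; 35]); ([:: 7; 6; 6; 5], [:: 33; 81]); ([:: 7; 6; 6; 7], [:: 33; 87]); ([:: 6; 6; 6; 7], [:: 35; 32]); ([:: 6; 7; 6; 6], [:: 35; 33]); ([:: 6; 5; 6; 5], [:: 35; 34])].
Definition nbtbl : seq (seq nat) := [:: [:: 4; 6; 96];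
 [:: 4; 25; 79];
 [:: 5; 14; 92];
 [:: 5; 51; 57];
 [:: 0; 1; 5];
 [:: 2; 3; 4];
 [:: 0; 10; 12];
 [:: 10; 31; 85];
 [:: 11; 20; 98];
 [:: 11; 57; 63];
 [:: 6; 7; 11];
 [:: 8; 9; 10];
 [:: 6; 16; 18];
 [:: 16; 37; 91];
 [:: 2; 17; 26];
 [:: 17; 63; 69];
 [:: 12; 13; 17];
 [:: 14; 15; 16];
 [:: 12; 22; 24];
 [:: 22; 43; 97];
 [:: 8; 23; 32];
 [:: 23; 69; 75];
 [:: 18; 19; 23];
 [:: 20; 21; 22];
 [:: 18; 28; 30];
 [:: 1; 28; 49];
 [:: 14; 29; 38];
 [:: 29; 75; 81];
 [:: 24; 25; 29];
 [:: 26; 27; 28];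
 [:: 24; 34; 36];
 [:: 7; 34; 55];
 [:: 20; 35; 44];
 [:: 35; 81; 87];
 [:: 30; 31; 35];
 [:: 32; 33; 34];
 [:: 30; 40; 42];
 [:: 13; 40; 61];
 [:: 26; 41; 50];
 [:: 41; 87; 93];
 [:: 36; 37; 41];
 [:: 38; 39; 40];
 [:: 36; 46; 48];
 [:: 19; 46; 67];
 [:: 32; 47; 56];
 [:: 47; 93; 99];
 [:: 42; 43; 47];
 [:: 44; 45; 46];
 [:: 42; 52; 54];
 [:: 25; 52; 73];
 [:: 38; 53; 62];
 [:: 3; 53; 99];
 [:: 48; 49; 53];
 [:: 50; 51; 52];
 [:: 48; 58; 60];
 [:: 31; 58; 79];
 [:: 44; 59; 68];
 [:: 3; 9; 59];
 [:: 54; 55; 59];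
 [:: 56; 57; 58];
 [:: 54; 64; 66];
 [:: 37; 64; 85];
 [:: 50; 65; 74];
 [:: 9; 15; 65];
 [:: 60; 61; 65];
 [:: 62; 63; 64];
 [:: 60; 70; 72];
 [:: 43; 70; 91];
 [:: 56; 71; 80];
 [:: 15; 21; 71];
 [:: 66; 67; 71];
 [:: 68; 69; 70];
 [:: 66; 76; 78];
 [:: 49; 76; 97];
 [:: 62; 77; 86];
 [:: 21; 27; 77];
 [:: 72; 73; 77];
 [:: 74; 75; 76];
 [:: 72; 82; 84];
 [:: 1; 55; 82];
 [:: 68; 83; 92];
 [:: 27; 33; 83];
 [:: 78; 79; 83];
 [:: 80; 81; 82];
 [:: 78; 88; 90];
 [:: 7; 61; 88];
 [:: 74; 89; 98];
 [:: 33; 39; 89];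
 [:: 84; 85; 89];
 [:: 86; 87; 88];
 [:: 84; 94; 96];
 [:: 13; 67; 94];
 [:: 2; 80; 95];
 [:: 39; 45; 95];
 [:: 90; 91; 95];
 [:: 92; 93; 94];
 [:: 0; 90; 100];
 [:: 19; 73; 100];
 [:: 8; 86; 101];
 [:: 45; 51; 101];
 [:: 96; 97; 101];
 [:: 98; 99; 100]].

Definition idx (x : BSV) : nat := 6 * x.1 + x.2.
Definition ofi (n : nat) : BSV :=
  (Ordinal (ltn_pmod (n %/ 6) (isT : 0 < 17)), Ordinal (ltn_pmod n (isT : 0 < 6))).
Definition allV : seq BSV := map ofi (iota 0 102).
Definition fadj (x y : BSV) : bool := idx y \in nth [::] nbtbl (idx x).
Definition gf (k : nat) (x : BSV) : BSV := ofi (nth 0 (nth [::] gtbl (k %% 4)) (idx x)).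
Definition apw (w : seq nat) (x : BSV) : BSV := foldl (fun x k => gf k x) x w.
Definition lk {T : Type} (d : T) (l : seq (seq nat * T)) (k : seq nat) : T :=
  nth d (map snd l) (index k (map fst l)).
Definition D0 (x : BSV) : nat := nth 0 D0tbl (idx x).
Definition D1 (x : BSV) : nat := nth 0 D1tbl (idx x).
Definition u0 : BSV := ofi 0.
Definition v0 : BSV := ofi 4.
Definition wa (u v : BSV) := lk [::] watbl [:: idx u; idx v].
Definition w1 (x : BSV) := nth [::] w1tbl (idx x).
Definition rep1 (a b : nat) : BSV := ofi (lk 0 rep1tbl [:: a; b]).
Definition w2 (x y : BSV) := lk [::] w2tbl [:: idx x; idx y].
Definition rep2 (p : seq nat) : BSV * BSV :=
  let r := lk [::] rep2tbl p in (ofi (nth 0 r 0), ofi (nth 0 r 1)).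

Definition c_adj := all (fun x => all (fun y => bs_adj x y == fadj x y) allV) allV.
Definition c_gen := all (fun k => all (fun x => let gx := gf k x in
   all (fun y => let gy := gf k y in ((gx == gy) ==> (x == y)) && (fadj gx gy == fadj x y)) allV) allV) (iota 0 4).
Definition c_dist (x0 : BSV) (D : BSV -> nat) :=
  [&& all (fun z => (D z == 0) == (z == x0)) allV,
      all (fun z => all (fun w => fadj z w ==> (D w <= D z + 1)) allV) allV,
      all (fun z => (0 < D z) ==> has (fun w => fadj w z && (D w == (D z).-1)) allV) allV &
      all (fun z => D z < 102) allV].
Definition nbl (x : BSV) : seq BSV := map ofi (nth [::] nbtbl (idx x)).
Definition c_arc := all (fun u => all (fun v =>
   (apw (wa u v) u == u0) && (apw (wa u v) v == v0)) (nbl u)) allV.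
Definition c_1 := all (fun x => let w := w1 x in
  [&& apw w u0 == u0, apw w v0 == v0 & apw w x == rep1 (D0 x) (D1 x)]) allV.
Definition c_2 := all (fun x => all (fun y => let w := w2 x y in
  let r := rep2 [:: D0 x; D0 y; D1 x; D1 y] in
  [&& apw w u0 == u0, apw w v0 == v0, apw w x == r.1 & apw w y == r.2]) (nbl x)) allV.

Lemma c_adj_ok : c_adj. Proof. vm_compute; reflexivity. Qed.
Lemma c_gen_ok : c_gen. Proof. vm_compute; reflexivity. Qed.
Lemma c_d0_ok : c_dist u0 D0. Proof. vm_compute; reflexivity. Qed.
Lemma c_d1_ok : c_dist v0 D1. Proof. vm_compute; reflexivity. Qed.
Lemma c_arc_ok : c_arc. Proof. vm_compute; reflexivity. Qed.
Lemma c_1_ok : c_1. Proof. vm_compute; reflexivity. Qed.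
Lemma c_2_ok : c_2. Proof. vm_compute; reflexivity. Qed.

Lemma ofi_idx x : ofi (idx x) = x.
Proof.
case: x => [[i Hi] [s Hs]]; rewrite /ofi /idx /=.
congr pair; apply: ord_inj => /=.
- lia.
- lia.
Qed.

Lemma idx_lt x : idx x < 102.
Proof. case: x => [[i Hi] [s Hs]]; rewrite /idx /=; lia. Qed.

Lemma mem_allV x : x \in allV.
Proof. by rewrite -(ofi_idx x) /allV map_f // mem_iota add0n idx_lt. Qed.

Lemma allV_P (P : pred BSV) : all P allV -> forall x, P x.
Proof. by move/allP=> H x; apply: H; apply: mem_allV. Qed.

Lemma adjE x y : bs_adj x y = fadj x y.
Proof. by have /eqP := allV_P (allV_P c_adj_ok x) y. Qed.

Lemma nblP x y : fadj x y -> y \in nbl x.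
Proof. by rewrite /fadj /nbl => H; rewrite -(ofi_idx y) map_f. Qed.

Lemma gf_mod k : gf k = gf (k %% 4).
Proof. by rewrite /gf modn_mod. Qed.

Lemma gen_ok k x y : ((gf k x == gf k y) ==> (x == y)) && (fadj (gf k x) (gf k y) == fadj x y).
Proof.
rewrite gf_mod.
have Hk : k %% 4 \in iota 0 4 by rewrite mem_iota add0n ltn_mod.
have := c_gen_ok; rewrite /c_gen => /allP /(_ _ Hk) H.
exact: (allV_P (allV_P H x) y).
Qed.

Lemma gf_inj k : injective (gf k).
Proof. by move=> x y E; have /andP[/implyP H _] := gen_ok k x y; apply/eqP/H; rewrite E. Qed.

Lemma gf_adj k x y : bs_adj (gf k x) (gf k y) = bs_adj x y.
Proof. by have /andP[_ /eqP] := gen_ok k x y; rewrite !adjE. Qed.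

Definition gp (k : nat) : {perm BSV} := perm (@gf_inj k).
Definition pw (w : seq nat) : {perm BSV} := foldr (fun k p => gp k * p)%g 1%g w.

Lemma pwE w x : pw w x = apw w x.
Proof.
elim: w x => [|k w IH] x /=; first by rewrite perm1.
by rewrite permM IH /gp permE.
Qed.

Lemma aut1 : bs_aut 1%g.
Proof. by move=> x y; rewrite !perm1. Qed.

Lemma autM p q : bs_aut p -> bs_aut q -> bs_aut (p * q)%g.
Proof. by move=> Hp Hq x y; rewrite !permM Hq Hp. Qed.

Lemma autV p : bs_aut p -> bs_aut (p^-1)%g.
Proof. by move=> Hp x y; rewrite -Hp !permKV. Qed.

Lemma pw_aut w : bs_aut (pw w).
Proof.
elim: w => [|k w IH] /=; first exact: aut1.
apply: autM => // x y; by rewrite /gp !permE gf_adj.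
Qed.

Lemma reach_aut p n x y : bs_aut p -> bs_reach n (p x) (p y) = bs_reach n x y.
Proof.
move=> Hp; elim: n y => [|n IH] y /=; first by rewrite (inj_eq (@perm_inj _ p)).
rewrite IH; congr orb; apply/existsP/existsP => [[z /andP[H1 H2]]|[z /andP[H1 H2]]].
- exists (p^-1 z)%g; rewrite -IH -Hp !permKV H1 /=; done.
- by exists (p z); rewrite IH Hp H1.
Qed.

Lemma dist_aut p x y : bs_aut p -> bs_dist (p x) (p y) = bs_dist x y.
Proof. by move=> Hp; rewrite /bs_dist; apply: eq_find => n; rewrite reach_aut. Qed.

Lemma find_ge d k m : k <= d < k + m -> find (fun n => d <= n) (iota k m) = d - k.
Proof.
elim: m k => [|m IH] k /andP[H1 H2]; first by rewrite addn0 in H2; lia.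
rewrite /= ; case: ifP => H; first by lia.
rewrite IH; first by lia.
by apply/andP; split; lia.
Qed.

Lemma dist_cert x0 D : c_dist x0 D -> forall z, bs_dist x0 z = D z.
Proof.
case/and4P => /allV_P H0 /allV_P Hb /allV_P Hc /allV_P Hd.
have R : forall n z, bs_reach n x0 z = (D z <= n).
  elim=> [|n IH] z /=.
    by rewrite leqn0 (eqP (H0 z)) eq_sym.
  rewrite IH; apply/idP/idP.
  - case/orP => [H|/existsP[w /andP[Hw Hwz]]]; first by lia.
    rewrite IH in Hw; rewrite adjE in Hwz.
    have := Hb w; move/allV_P/(_ z); rewrite Hwz /= => Hl; lia.
  - rewrite leq_eqVlt ltnS => /orP[/eqP E|->//]; apply/orP; right.
    have := Hc z; rewrite E ltn0Sn => /implyP/(_ isT)/hasP[w _ /andP[Hwz /eqP Ew]].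
    by apply/existsP; exists w; rewrite IH adjE Hwz Ew leqnn.
move=> z; rewrite /bs_dist.
rewrite (eq_find (a2 := fun n => D z <= n)); last by move=> n; rewrite R.
rewrite card_prod !card_ord find_ge ?subn0 //.
by rewrite /= Hd.
Qed.

Lemma distD0 z : bs_dist u0 z = D0 z. Proof. exact: dist_cert c_d0_ok z. Qed.
Lemma distD1 z : bs_dist v0 z = D1 z. Proof. exact: dist_cert c_d1_ok z. Qed.

Lemma arc_norm u v : bs_adj u v -> exists g : {perm BSV}, [/\ bs_aut g, g u = u0 & g v = v0].
Proof.
rewrite adjE => /nblP Huv.
have := c_arc_ok; rewrite /c_arc => /allV_P /(_ u) /allP /(_ v Huv) /andP[/eqP E1 /eqP E2].
by exists (pw (wa u v)); rewrite !pwE; split => //; exact: pw_aut.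
Qed.

Lemma glue (A B : {perm BSV}) a b : A a = B b -> (A * B^-1)%g a = b.
Proof. by move=> E; rewrite permM E permK. Qed.

Lemma C1 z : [/\ pw (w1 z) u0 = u0, pw (w1 z) v0 = v0 & pw (w1 z) z = rep1 (D0 z) (D1 z)].
Proof.
have H := allV_P c_1_ok z.
move: H => /= /and3P [a b c].
move/eqP: a => a; move/eqP: b => b; move/eqP: c => c.
rewrite !pwE; split; [exact a | exact b | exact c].
Qed.

Lemma C2 x y : bs_adj x y -> let r := rep2 [:: D0 x; D0 y; D1 x; D1 y] in
  [/\ pw (w2 x y) u0 = u0, pw (w2 x y) v0 = v0, pw (w2 x y) x = r.1 & pw (w2 x y) y = r.2].
Proof.
rewrite adjE => /nblP H.
have H2 := allP (allV_P c_2_ok x) y H.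
move: H2 => /= /and4P [a b c d].
move/eqP: a => a; move/eqP: b => b; move/eqP: c => c; move/eqP: d => d.
rewrite !pwE; split; [exact a | exact b | exact c | exact d].
Qed.

Lemma D0g (g : {perm BSV}) u x : bs_aut g -> g u = u0 -> D0 (g x) = bs_dist u x.
Proof. by move=> Hg gu; rewrite -distD0 -gu dist_aut. Qed.
Lemma D1g (g : {perm BSV}) u x : bs_aut g -> g u = v0 -> D1 (g x) = bs_dist u x.
Proof. by move=> Hg gu; rewrite -distD1 -gu dist_aut. Qed.

Lemma glue3 (g g' s s' : {perm BSV}) a a' m m' r :
  g a = m -> g' a' = m' -> s m = r -> s' m' = r -> ((g * s) * (g' * s')^-1)%g a = a'.
Proof. by move=> E1 E2 E3 E4; apply: glue; rewrite !permM E1 E2 E3 E4. Qed.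

Theorem lemma2p4 :
  (forall u v x u' v' x' : BSV,
      bs_adj u v -> bs_adj u' v' ->
      bs_dist u x = bs_dist u' x' -> bs_dist v x = bs_dist v' x' ->
      exists phi : {perm BSV},
        [/\ bs_aut phi, phi u = u', phi v = v' & phi x = x'])
  /\
  (forall u v x y u' v' x' y' : BSV,
      bs_adj u v -> bs_adj x y -> bs_adj u' v' -> bs_adj x' y' ->
      bs_dist u x = bs_dist u' x' -> bs_dist u y = bs_dist u' y' ->
      bs_dist v x = bs_dist v' x' -> bs_dist v y = bs_dist v' y' ->
      exists phi : {perm BSV},
        [/\ bs_aut phi, phi u = u', phi v = v', phi x = x' & phi y = y']).
Proof.
split.
- move=> u v x u' v' x' Huv Hu'v' E1 E2.
  have [g [Hg gu gv]] := arc_norm Huv.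
  have [g' [Hg' gu' gv']] := arc_norm Hu'v'.
  have [a1 b1 c1] := C1 (g x).
  have [a2 b2 c2] := C1 (g' x').
  exists ((g * pw (w1 (g x))) * (g' * pw (w1 (g' x')))^-1)%g.
  split.
  + exact: autM (autM Hg (pw_aut _)) (autV (autM Hg' (pw_aut _))).
  + exact: (glue3 gu gu' a1 a2).
  + exact: (glue3 gv gv' b1 b2).
  + apply: (glue3 (erefl (g x)) (erefl (g' x')) c1).
    rewrite c2.
    by rewrite (D0g x Hg gu) (D0g x' Hg' gu') (D1g x Hg gv) (D1g x' Hg' gv') E1 E2.
- move=> u v x y u' v' x' y' Huv Hxy Hu'v' Hx'y' E1 E2 E3 E4.
  have [g [Hg gu gv]] := arc_norm Huv.
  have [g' [Hg' gu' gv']] := arc_norm Hu'v'.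
  have Ha : bs_adj (g x) (g y) by rewrite Hg.
  have Ha' : bs_adj (g' x') (g' y') by rewrite Hg'.
  have [a1 b1 c1 d1] := C2 Ha.
  have [a2 b2 c2 d2] := C2 Ha'.
  have EP : [:: D0 (g x); D0 (g y); D1 (g x); D1 (g y)] =
            [:: D0 (g' x'); D0 (g' y'); D1 (g' x'); D1 (g' y')].
    by rewrite (D0g x Hg gu) (D0g x' Hg' gu') (D1g x Hg gv) (D1g x' Hg' gv')
               (D0g y Hg gu) (D0g y' Hg' gu') (D1g y Hg gv) (D1g y' Hg' gv') E1 E2 E3 E4.
  rewrite EP in c1 d1.
  exists ((g * pw (w2 (g x) (g y))) * (g' * pw (w2 (g' x') (g' y')))^-1)%g.
  split.
  + exact: autM (autM Hg (pw_aut _)) (autV (autM Hg' (pw_aut _))).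
  + exact: (glue3 gu gu' a1 a2).
  + exact: (glue3 gv gv' b1 b2).
  + exact: (glue3 (erefl (g x)) (erefl (g' x')) c1 c2).
  + exact: (glue3 (erefl (g y)) (erefl (g' y')) d1 d2).
Qed.
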